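(* Suppose $f$ is $L_f$-smooth, $\mathbf{c}$ is $L_c$-smooth, and there exist $C,G>0$ such that for all $\mathbf{x}$: $\|\nabla f(\mathbf{x})\|\le G$, $\sup_{\mathbf{v}_h\in\partial h(\mathbf{x})}\|\mathbf{v}_h\|\le G$, $\sup_{\mathbf{v}_g\in\partial g(\mathbf{x})}\|\mathbf{v}_g\|\le G$, $\|\nabla\mathbf{c}(\mathbf{x})\|\le G$, $\|\mathbf{c}(\mathbf{x})\|\le C$; and the parameters satisfy $\mu_kL_{\rho_k}\le\frac14$, $\mu_{k+1}\le\mu_k$, $\rho_k\le\rho_{k+1}$, $0<\beta\le1$ for all $k\ge0$. Let $\underline\rho_K:=\min_{0\le k\le K-1}\rho_k$. Then for any $K\ge1$, $\frac1K\sum_{k=0}^{K-1}\|\nabla\mathbf{c}(\mathbf{x}^{k+1})\mathbf{c}(\mathbf{x}^{k+1})\|^2\le\frac{2}{\underline\rho_K^2K}\sum_{k=0}^{K-1}\|\mathbf{u}^{k+1}\|^2+\frac{18G^2}{\underline\rho_K^2}$. Moreover, if there exists $\delta>0$ such that $\|\nabla\mathbf{c}(\mathbf{x}^k)\mathbf{c}(\mathbf{x}^k)\|\ge\delta\|\mathbf{c}(\mathbf{x}^k)\|$ for all iterates $k\ge0$, then $\frac1K\sum_{k=0}^{K-1}\|\mathbf{c}(\mathbf{x}^{k+1})\|^2\le\frac{2}{\underline\rho_K^2\delta^2K}\sum_{k=0}^{K-1}\|\mathbf{u}^{k+1}\|^2+\frac{18G^2}{\delta^2\underline\rho_K^2}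$.
   Context: Problem: $\min f(\mathbf{x})+h(\mathbf{x})-g(\mathbf{x})$ s.t. $\mathbf{c}(\mathbf{x})=\mathbf{0}$, $f=\mathbb{E}_\xi[\mathbf{f}(\cdot,\xi)]$, $h,g$ proper closed convex; $\nabla\mathbf{c}(\mathbf{x})$ the transposed Jacobian. $Q_\rho(\mathbf{x})=f(\mathbf{x})+\frac{\rho}{2}\|\mathbf{c}(\mathbf{x})\|^2$, $L_\rho=\rho(\rho_0^{-1}L_f+G^2+CL_c)$. Iterates $(\mathbf{x}^k,\mathbf{z}^k)$ of MoSSP-P or MoSSP-R: $\mathbf{x}^{k+1}=\mathrm{prox}_{\mu_kh}(\mathbf{z}^k-\mu_k\mathbf{G}^k)$, $\mathbf{z}^{k+1}=\mathbf{z}^k-\beta(\mathrm{prox}_{\mu_kg}(\mathbf{z}^k)-\mathbf{x}^{k+1})$, with $\mathbf{G}^k$ the momentum estimator ($\mathbf{S}^k$ or $\mathbf{D}^k$) of $\nabla Q_{\rho_k}(\mathbf{x}^k)$; $\mathbf{u}^{k+1}:=\nabla Q_{\rho_k}(\mathbf{x}^{k+1})-\mathbf{G}^k+\mu_k^{-1}(\mathrm{prox}_{\mu_kg}(\mathbf{z}^k)-\mathbf{x}^{k+1})\in\nabla Q_{\rho_k}(\mathbf{x}^{k+1})+\partial h(\mathbf{x}^{k+1})-\partial g(\mathrm{prox}_{\mu_kg}(\mathbf{z}^k))$. *)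

(* Defs.v *)
From HB Require Import structures.
From mathcomp Require Import all_boot all_order all_algebra.
From mathcomp Require Import reals constructive_ereal.
Set Implicit Arguments. Unset Strict Implicit. Unset Printing Implicit Defensive.
Import Order.TTheory GRing.Theory Num.Theory.
Local Open Scope ring_scope.

Section Defs.
Variable R : realType.

Definition dotv n (u v : 'rV[R]_n) : R := \sum_(i < n) u ord0 i * v ord0 i.
Definition enorm n (v : 'rV[R]_n) : R := Num.sqrt (\sum_(i < n) (v ord0 i) ^+ 2).

(* Operator (spectral) norm bound: ||A|| <= G for A : R^m -> R^n, where
   A is represented by right multiplication of row vectors w |-> w *m M. *)
Definition opnorm_le m n (M : 'M[R]_(m, n)) (G : R) : Prop :=
  forall w : 'rV[R]_m, enorm (w *m M) <= G * enorm w.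

Definition is_gradient n (f : 'rV[R]_n -> R) (gf : 'rV[R]_n -> 'rV[R]_n) : Prop :=
  forall x (eps : R), 0 < eps -> exists2 delta : R, 0 < delta &
    forall h, enorm h < delta ->
      `|f (x + h) - f x - dotv (gf x) h| <= eps * enorm h.

(* J x : 'M_(m,n) is the Jacobian of c : R^n -> R^m at x (J_{ij} = d c_i / d x_j);
   the transposed Jacobian grad c(x) acts on w : R^m as w *m J x. *)
Definition is_jacobian n m (c : 'rV[R]_n -> 'rV[R]_m) (J : 'rV[R]_n -> 'M[R]_(m, n)) : Prop :=
  forall x (eps : R), 0 < eps -> exists2 delta : R, 0 < delta &
    forall h, enorm h < delta ->
      enorm (c (x + h) - c x - h *m (J x)^T) <= eps * enorm h.

Definition L_smooth n (f : 'rV[R]_n -> R) (gf : 'rV[R]_n -> 'rV[R]_n) (L : R) : Prop :=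
  is_gradient f gf /\ forall x y, enorm (gf x - gf y) <= L * enorm (x - y).

Definition L_smooth_map n m (c : 'rV[R]_n -> 'rV[R]_m) (J : 'rV[R]_n -> 'M[R]_(m, n))
  (L : R) : Prop :=
  is_jacobian c J /\ forall x y, opnorm_le (J x - J y) (L * enorm (x - y)).

Definition proper_fun n (h : 'rV[R]_n -> \bar R) : Prop :=
  (exists x, h x < +oo)%E /\ (forall x, -oo < h x)%E.

Definition closed_fun n (h : 'rV[R]_n -> \bar R) : Prop :=
  forall x (a : R), (a%:E < h x)%E -> exists2 delta : R, 0 < delta &
    forall y, enorm (y - x) < delta -> (a%:E < h y)%E.

Definition convex_fun n (h : 'rV[R]_n -> \bar R) : Prop :=
  forall x y (t : R), 0 <= t <= 1 ->
    (h (t *: x + (1 - t) *: y)%R <= t%:E * h x + (1 - t)%:E * h y)%E.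

Definition pcc n (h : 'rV[R]_n -> \bar R) : Prop :=
  [/\ proper_fun h, closed_fun h & convex_fun h].

Definition subgrad n (h : 'rV[R]_n -> \bar R) (x v : 'rV[R]_n) : Prop :=
  h x \is a fin_num /\ forall y, (h x + (dotv v (y - x)%R)%:E <= h y)%E.

Definition is_prox n (mu : R) (h : 'rV[R]_n -> \bar R) (y p : 'rV[R]_n) : Prop :=
  forall x, (h p + ((2 * mu)^-1 * enorm (p - y)%R ^+ 2)%:E
             <= h x + ((2 * mu)^-1 * enorm (x - y)%R ^+ 2)%:E)%E.

(* grad Q_rho(x) = grad f(x) + rho * grad c(x) c(x),  Q_rho = f + rho/2 ||c||^2 *)
Definition gradQ n m (gf : 'rV[R]_n -> 'rV[R]_n) (c : 'rV[R]_n -> 'rV[R]_m)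
  (J : 'rV[R]_n -> 'M[R]_(m, n)) (rho : R) (x : 'rV[R]_n) : 'rV[R]_n :=
  gf x + rho *: (c x *m J x).

Definition Lrho (rho0 Lf G C Lc rho : R) : R := rho * (rho0^-1 * Lf + G ^+ 2 + C * Lc).

(* u^{k+1} = grad Q_{rho_k}(x^{k+1}) - G^k + mu_k^{-1}(prox_{mu_k g}(z^k) - x^{k+1}),
   where w k = prox_{mu_k g}(z^k). *)
Definition uvec n m (gf : 'rV[R]_n -> 'rV[R]_n) (c : 'rV[R]_n -> 'rV[R]_m)
  (J : 'rV[R]_n -> 'M[R]_(m, n)) (rho mu : nat -> R) (x w Gk : nat -> 'rV[R]_n)
  (k : nat) : 'rV[R]_n :=
  gradQ gf c J (rho k) (x k.+1) - Gk k + (mu k)^-1 *: (w k - x k.+1).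

Definition rho_min (rho : nat -> R) (K : nat) : R :=
  \big[Num.min/rho 0%N]_(k < K) rho k.

End Defs.

(* Main.v *)
Require Import Defs.
From HB Require Import structures.
From mathcomp Require Import all_boot all_order all_algebra.
From mathcomp Require Import reals constructive_ereal.
From mathcomp Require Import ring lra.
Import Order.TTheory GRing.Theory Num.Theory.
Set Implicit Arguments. Unset Strict Implicit.
Local Open Scope ring_scope.

Section H.
Variable R : realType.

Definition NN n (v : 'rV[R]_n) : R := \sum_(i < n) (v ord0 i) ^+ 2.

Lemma NN_ge0 n (v : 'rV[R]_n) : 0 <= NN v.
Proof. by apply: sumr_ge0 => i _; exact: sqr_ge0. Qed.

Lemma enorm_sq n (v : 'rV[R]_n) : enorm v ^+ 2 = NN v.
Proof. by rewrite /enorm sqr_sqrtr // NN_ge0. Qed.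

Lemma enorm_ge0 n (v : 'rV[R]_n) : 0 <= enorm v.
Proof. exact: sqrtr_ge0. Qed.

Lemma NN_le n (v : 'rV[R]_n) G : enorm v <= G -> NN v <= G ^+ 2.
Proof.
move=> H; rewrite -enorm_sq; have := enorm_ge0 v => H0.
by rewrite ler_sqr ?nnegrE //; apply: le_trans H.
Qed.

Lemma NN_scale n (a : R) (v : 'rV[R]_n) : NN (a *: v) = a ^+ 2 * NN v.
Proof.
rewrite /NN mulr_sumr; apply: eq_bigr => i _; rewrite mxE; ring.
Qed.

Lemma NN_comb n (a b c d : 'rV[R]_n) :
  NN (a - b - c + d) <= 2 * NN a + 6 * (NN b + NN c + NN d).
Proof.
rewrite /NN -!big_split /= !mulr_sumr -big_split /=.
apply: ler_sum => i _; rewrite !mxE.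
set A := a ord0 i; set B := b ord0 i; set C := c ord0 i; set D := d ord0 i.
have h1 := sqr_ge0 (A + B + C - D).
have h2 := sqr_ge0 (B - C).
have h3 := sqr_ge0 (B + D).
have h4 := sqr_ge0 (C + D).
nra.
Qed.

Lemma small_t (X s E : R) : 0 <= E ->
  (forall t, 0 < t -> t <= 1 -> X <= s + t * E) -> X <= s.
Proof.
move=> E0 H; rewrite leNgt; apply/negP => Hlt.
set e := X - s.
have e0 : 0 < e by rewrite /e subr_gt0.
have Ee : 0 < E + e by lra.
have := H (e / (E + e)).
rewrite divr_gt0 // ler_pdivrMr // mul1r.
have -> : e / (E + e) * E = e * (E / (E + e)) by rewrite mulrAC mulrA.
move=> /(_ isT) /(_ ltac:(lra)).
have : E / (E + e) < 1 by rewrite ltr_pdivrMr // mul1r; lra.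
move=> H1 H2.
have : e * (E / (E + e)) < e by rewrite -[X in _ < X]mulr1 ltr_pM2l.
rewrite /e in H2 * => H3; lra.
Qed.

Lemma final_arith (a K S1 S2 G : R) : 0 < a -> 0 < K ->
  S1 * a <= 2 * S2 + K * (18 * G ^+ 2) ->
  K^-1 * S1 <= 2 / (a * K) * S2 + 18 * G ^+ 2 / a.
Proof.
move=> a0 K0 H.
have -> : 2 / (a * K) * S2 + 18 * G ^+ 2 / a =
   (2 * S2 + K * (18 * G ^+ 2)) / (a * K).
  by field; apply/andP; split; rewrite gt_eqF.
rewrite ler_pdivlMr ?mulr_gt0 //.
apply: le_trans H; rewrite le_eqVlt; apply/orP; left; apply/eqP.
by field; rewrite gt_eqF.
Qed.



Lemma prox_subgrad n (mu : R) (h : 'rV[R]_n -> \bar R) y p :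
  0 < mu -> pcc h -> is_prox mu h y p -> subgrad h p (mu^-1 *: (y - p)).
Proof.
move=> mu0 [[[x0 hx0] hninf] _ hconv] hp.
have [r hr] : exists r, h p = r%:E.
  move: (hp x0) (hninf p); case: (h p) => [r _ _| H _| _ K]; first by exists r.
  - move: H hx0; case: (h x0) => [s| |] H0 H1.
    + by move: H0; rewrite -EFinD addye // leye_eq.
    + by rewrite ltxx in H1.
    + by move: H0; rewrite addye // leye_eq.
  - by rewrite ltxx in K.
split; first by rewrite hr.
move=> y'; rewrite hr.
move: (hninf y'); case Hy': (h y') => [s| |] _ //; last by rewrite leey.
rewrite -EFinD lee_fin.
set D := \sum_(i < n) (p ord0 i - y ord0 i) * (y' ord0 i - p ord0 i).
set E := NN (y' - p).
have hdot : dotv (mu^-1 *: (y - p)) (y' - p) = - (mu^-1 * D).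
  rewrite /dotv /D mulr_sumr -sumrN; apply: eq_bigr => i _; rewrite !mxE; ring.
rewrite hdot.
apply: (@small_t _ _ (E / (2 * mu))).
  by rewrite divr_ge0 ?NN_ge0 // mulr_ge0 // ltW.
move=> t t0 t1.
set q := t *: y' + (1 - t) *: p.
have hq : enorm (q - y) ^+ 2 = NN (p - y) + 2 * t * D + t ^+ 2 * E.
  rewrite enorm_sq /NN /D /E mulr_sumr mulr_sumr -!big_split /=.
  apply: eq_bigr => i _; rewrite !mxE; ring.
have hpy : enorm (p - y) ^+ 2 = NN (p - y) by rewrite enorm_sq.
have hc := hconv y' p t (ltac:(apply/andP; split; lra)).
have hpq := hp q.
rewrite hr Hy' hq hpy in hc hpq.
rewrite -/q in hc.
move: hc hpq; case: (h q) => [v| |] //.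
  rewrite -!EFinM -!EFinD !lee_fin => hc hpq.
  have hm : (2 * mu)^-1 * (NN (p - y) + 2 * t * D + t ^+ 2 * E)
     = (2 * mu)^-1 * NN (p - y) + t * (mu^-1 * D) + t * (t * (E / (2 * mu))).
    by field; rewrite gt_eqF.
  rewrite hm in hpq.
  set M := mu^-1 * D in hpq *; set W := E / (2 * mu) in hpq *.
  have : t * (r - M) <= t * (s + t * W) by nra.
  by rewrite ler_pM2l.
Qed.

End H.

Theorem lemmaC4 (R : realType) (n m : nat)
  (f : 'rV[R]_n -> R) (gf : 'rV[R]_n -> 'rV[R]_n)
  (c : 'rV[R]_n -> 'rV[R]_m) (J : 'rV[R]_n -> 'M[R]_(m, n))
  (h g : 'rV[R]_n -> \bar R)
  (Lf Lc C G beta : R) (mu rho : nat -> R)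
  (x z w Gk : nat -> 'rV[R]_n) :
  pcc h -> pcc g ->
  L_smooth f gf Lf -> L_smooth_map c J Lc ->
  0 < C -> 0 < G ->
  (forall y, enorm (gf y) <= G) ->
  (forall y v, subgrad h y v -> enorm v <= G) ->
  (forall y v, subgrad g y v -> enorm v <= G) ->
  (forall y, opnorm_le (J y)^T G) ->
  (forall y, enorm (c y) <= C) ->
  (forall k, 0 < mu k) -> (forall k, 0 < rho k) ->
  (forall k, mu k * Lrho (rho 0%N) Lf G C Lc (rho k) <= 4^-1) ->
  (forall k, mu k.+1 <= mu k) ->
  (forall k, rho k <= rho k.+1) ->
  0 < beta <= 1 ->
  (* MoSSP iterates *)
  (forall k, is_prox (mu k) h (z k - mu k *: Gk k) (x k.+1)) ->
  (forall k, is_prox (mu k) g (z k) (w k)) ->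
  (forall k, z k.+1 = z k - beta *: (w k - x k.+1)) ->
  forall K : nat, (0 < K)%N ->
  let rK := rho_min rho K in
  let u := uvec gf c J rho mu x w Gk in
  (K%:R^-1 * \sum_(k < K) enorm (c (x k.+1) *m J (x k.+1)) ^+ 2
     <= 2 / (rK ^+ 2 * K%:R) * \sum_(k < K) enorm (u k) ^+ 2
        + 18 * G ^+ 2 / rK ^+ 2)
  /\
  (forall delta : R, 0 < delta ->
     (forall k, enorm (c (x k) *m J (x k)) >= delta * enorm (c (x k))) ->
     K%:R^-1 * \sum_(k < K) enorm (c (x k.+1)) ^+ 2
       <= 2 / (rK ^+ 2 * delta ^+ 2 * K%:R) * \sum_(k < K) enorm (u k) ^+ 2
          + 18 * G ^+ 2 / (delta ^+ 2 * rK ^+ 2)).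
Proof.
move=> hpcc gpcc _ _ C0 G0 hgf hh hg _ _ mu0 rho0 _ _ _ _ hxp hwp hz K K0 rK u.
have rK0 : 0 < rK.
  rewrite /rK /rho_min; apply: (big_ind (fun v => 0 < v)) => //.
  by move=> a b ha hb; rewrite lt_min ha hb.
have rKle : forall k : 'I_K, rK <= rho k by move=> k; exact: bigmin_le.
have key : forall k : 'I_K,
    NN (c (x k.+1) *m J (x k.+1)) * rK ^+ 2 <= 2 * NN (u k) + 18 * G ^+ 2.
  move=> k.
  have hvh := prox_subgrad (mu0 k) hpcc (hxp k).
  have hvg := prox_subgrad (mu0 k) gpcc (hwp k).
  have eq : rho k *: (c (x k.+1) *m J (x k.+1)) =
     u k - gf (x k.+1) - (mu k)^-1 *: (z k - mu k *: Gk k - x k.+1)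
         + (mu k)^-1 *: (z k - w k).
    rewrite /u /uvec /gradQ; apply/matrixP => i j; rewrite !mxE.
    by field; rewrite gt_eqF.
  have := NN_comb (u k) (gf (x k.+1)) ((mu k)^-1 *: (z k - mu k *: Gk k - x k.+1))
         ((mu k)^-1 *: (z k - w k)).
  rewrite -eq NN_scale => H.
  have h1 := NN_le (hgf (x k.+1)).
  have h2 := NN_le (hh _ _ hvh).
  have h3 := NN_le (hg _ _ hvg).
  have hv := NN_ge0 (c (x k.+1) *m J (x k.+1)).
  have hr := rKle k.
  have hr2 : rK ^+ 2 <= rho k ^+ 2 by rewrite ler_pXn2r // ?nnegrE ltW // (lt_le_trans rK0).
  have : NN (c (x k.+1) *m J (x k.+1)) * rK ^+ 2 <= NN (c (x k.+1) *m J (x k.+1)) * rho k ^+ 2.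
    by rewrite ler_wpM2l.
  move=> H2; apply: le_trans H2 _; rewrite mulrC; apply: le_trans H _; lra.
have sumK : forall (F : 'I_K -> R), \sum_(k < K) (2 * F k + 18 * G ^+ 2)
     = 2 * \sum_(k < K) F k + K%:R * (18 * G ^+ 2).
  by move=> F; rewrite big_split /= -mulr_sumr sumr_const card_ord [K%:R * _]mulr_natl.
have K0' : 0 < K%:R :> R by rewrite ltr0n.
split.
  apply: final_arith => //; first by rewrite exprn_gt0.
  rewrite mulr_suml -sumK; apply: ler_sum => k _; rewrite !enorm_sq; exact: key.
move=> delta d0 hd.
rewrite [delta ^+ 2 * rK ^+ 2]mulrC.
apply: final_arith => //; first by rewrite mulr_gt0 // exprn_gt0.
rewrite mulr_suml -sumK; apply: ler_sum => k _.
rewrite !enorm_sq.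
have hsq : delta ^+ 2 * NN (c (x k.+1)) <= NN (c (x k.+1) *m J (x k.+1)).
  have := hd k.+1 => H.
  have e0 := enorm_ge0 (c (x k.+1)).
  have m0 : 0 <= delta * enorm (c (x k.+1)) by exact: mulr_ge0 (ltW d0) e0.
  by rewrite -!enorm_sq -exprMn ler_pXn2r ?nnegrE // (le_trans m0 H).
apply: le_trans (key k).
have r2 : 0 <= rK ^+ 2 by rewrite exprn_ge0 // ltW.
set a := rK ^+ 2 in r2 *.
rewrite mulrA [NN (c _) * a]mulrC -mulrA [NN _ * a]mulrC ler_wpM2l //.
by rewrite mulrC.
Qed.
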